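(* Let $\mathbb{K}$ be a field of characteristic $0$ and let $\mathcal{P}=\mathcal{P}_0\oplus\mathcal{P}_1$ be a $\mathbb{K}$-super vector space. (i) Suppose $(\mathcal{P},\cdot,\{\,,\})$ is a Poisson superalgebra. Define a bilinear product on $\mathcal{P}$ by $xy=x\cdot y+\{x,y\}$. Then, for all homogeneous $x,y,z\in\mathcal{P}$, $$3(xy)z-3x(yz)+(-1)^{|x||y|}(yx)z-(-1)^{|y||z|}(xz)y-(-1)^{|x||y|+|x||z|}(yz)x+(-1)^{|x||z|+|y||z|}(zx)y=0. \qquad (\ast)$$ (ii) Conversely, suppose $xy$ is an even bilinear product on $\mathcal{P}$ (i.e. $\mathcal{P}_i\mathcal{P}_j\subseteq\mathcal{P}_{i+j \bmod 2}$) satisfying $(\ast)$ for all homogeneous $x,y,z$. Extend the following formulas bilinearly from homogeneous $x,y$: $$x\cdot y=\tfrac12\big(xy+(-1)^{|x||y|}yx\big),\qquad \{x,y\}=\tfrac12\big(xy-(-1)^{|x||y|}yx\big).$$ Then $(\mathcal{P},\cdot,\{\,,\})$ is a Poisson superalgebra, and $xy=x\cdot y+\{x,y\}$. In particular, $\mathcal{P}$ admits a Poisson superalgebra structure if and only if it admits an even bilinear product satisfying $(\ast)$.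
   Context: A $\mathbb{K}$-super vector space is a $\mathbb{Z}_2$-graded vector space $\mathcal{P}=\mathcal{P}_0\oplus\mathcal{P}_1$; elements of $\mathcal{P}_0$ (resp. $\mathcal{P}_1$) are homogeneous of degree $0$ (resp. $1$), and $|x|$ denotes the degree of a homogeneous element $x$. All bilinear products considered are even (they map $\mathcal{P}_i\times\mathcal{P}_j$ into $\mathcal{P}_{i+j \bmod 2}$). A Poisson superalgebra is a super vector space $\mathcal{P}$ with two even bilinear products $x\cdot y$ and $\{x,y\}$ such that: (1) $(\mathcal{P},\cdot)$ is associative and supercommutative: $x\cdot y=(-1)^{|x||y|}y\cdot x$; (2) $(\mathcal{P},\{\,,\})$ is a Lie superalgebra: $\{x,y\}=-(-1)^{|x||y|}\{y,x\}$ and $(-1)^{|z||x|}\{x,\{y,z\}\}+(-1)^{|x||y|}\{y,\{z,x\}\}+(-1)^{|y||z|}\{z,\{x,y\}\}=0$; (3) super Leibniz rule: $\{x,y\cdot z\}=\{x,y\}\cdot z+(-1)^{|x||y|}y\cdot\{x,z\}$; all for homogeneous $x,y,z$. *)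

(* Defs.v *)
From HB Require Import structures.
From mathcomp Require Import all_boot all_order all_algebra.
Set Implicit Arguments. Unset Strict Implicit. Unset Printing Implicit Defensive.
Import Order.TTheory GRing.Theory Num.Theory.
Local Open Scope ring_scope.

(* A K-super vector space P = P_0 (+) P_1 is modelled as the product
   (V0 * V1) of two K-vector spaces; P_0 = V0 * 0 and P_1 = 0 * V1.
   Degrees are booleans: false = 0, true = 1. *)
Definition superspace (K : fieldType) (V0 V1 : lmodType K) : lmodType K :=
  (V0 * V1)%type.

Section Super.
Variables (K : fieldType) (V0 V1 : lmodType K).
Local Notation P := (superspace V0 V1).

Definition homog (i : bool) (x : P) : Prop :=
  if i then x.1 = 0 else x.2 = 0.

Definition comp (i : bool) (x : P) : P :=
  if i then ((0 : V0), x.2) else (x.1, (0 : V1)).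

Definition sgn (a b : bool) : K := (-1) ^+ (a && b).

Definition bilinear_prod (m : P -> P -> P) : Prop :=
  (forall (a : K) (x y z : P), m (a *: x + y) z = a *: m x z + m y z) /\
  (forall (a : K) (x y z : P), m z (a *: x + y) = a *: m z x + m z y).

Definition even_prod (m : P -> P -> P) : Prop :=
  forall (i j : bool) (x y : P), homog i x -> homog j y -> homog (i (+) j) (m x y).

Definition is_poisson_superalgebra (dot br : P -> P -> P) : Prop :=
  [/\ bilinear_prod dot, even_prod dot, bilinear_prod br, even_prod br &
  forall (a b c : bool) (x y z : P), homog a x -> homog b y -> homog c z ->
  [/\
      dot (dot x y) z = dot x (dot y z),
      dot x y = sgn a b *: dot y x,
      br x y = - (sgn a b *: br y x),
      sgn c a *: br x (br y z) + sgn a b *: br y (br z x)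
        + sgn b c *: br z (br x y) = 0 &
      br x (dot y z) = dot (br x y) z + sgn a b *: dot y (br x z)]].

Definition star_identity (m : P -> P -> P) : Prop :=
  forall (a b c : bool) (x y z : P), homog a x -> homog b y -> homog c z ->
    3%:R *: m (m x y) z - 3%:R *: m x (m y z)
    + sgn a b *: m (m y x) z
    - sgn b c *: m (m x z) y
    - sgn a b * sgn a c *: m (m y z) x
    + sgn a c * sgn b c *: m (m z x) y = 0.

(* the bilinear extensions of the formulas for homogeneous x, y *)
Definition sdot (m : P -> P -> P) (x y : P) : P :=
  \sum_(i : bool) \sum_(j : bool)
    2%:R^-1 *: (m (comp i x) (comp j y) + sgn i j *: m (comp j y) (comp i x)).

Definition sbr (m : P -> P -> P) (x y : P) : P :=
  \sum_(i : bool) \sum_(j : bool)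
    2%:R^-1 *: (m (comp i x) (comp j y) - sgn i j *: m (comp j y) (comp i x)).

End Super.

(* Main.v *)
Require Import Defs.
From HB Require Import structures.
From mathcomp Require Import all_boot all_order all_algebra.
From mathcomp Require Import ring.
Import GRing.Theory.
Local Open Scope ring_scope.
Set Implicit Arguments. Unset Strict Implicit.
Arguments Defs.comp : simpl never.

Section LC.
Variables (K : fieldType) (V : lmodType K).
Definition lc (n : nat) (f : nat -> V) (c : nat -> K) : V := \sum_(i < n) c i *: f i.
Definition dl (j : nat) : nat -> K := fun i => (i == j)%:R.
Lemma lc_dl n f j : (j < n)%N -> f j = lc n f (dl j).
Proof.
move=> Hj; rewrite /lc (bigD1 (Ordinal Hj)) //= /dl eqxx scale1r big1 ?addr0 //.
move=> i /eqP Hi; suff -> : (nat_of_ord i == j) = false by rewrite scale0r.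
by apply/negbTE/eqP => Hij; apply: Hi; apply: val_inj.
Qed.
Lemma lcD n f c d : lc n f c + lc n f d = lc n f (fun i => c i + d i).
Proof. by rewrite /lc -big_split; apply: eq_bigr => i _; rewrite scalerDl. Qed.
Lemma lcZ n f a c : a *: lc n f c = lc n f (fun i => a * c i).
Proof. by rewrite /lc scaler_sumr; apply: eq_bigr => i _; rewrite scalerA. Qed.
Lemma lcN n f c : - lc n f c = lc n f (fun i => - c i).
Proof. by rewrite /lc -sumrN; apply: eq_bigr => i _; rewrite scaleNr. Qed.
Lemma lc_ext n f c d : (forall i, (i < n)%N -> c i = d i) -> lc n f c = lc n f d.
Proof. by move=> H; apply: eq_bigr => i _; rewrite H. Qed.
Lemma lc_comb4 n f d c1 c2 c3 c4 (a1 a2 a3 a4 : K) :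
  lc n f c1 = 0 -> lc n f c2 = 0 -> lc n f c3 = 0 -> lc n f c4 = 0 ->
  (forall i, (i < n)%N -> d i = a1 * c1 i + a2 * c2 i + a3 * c3 i + a4 * c4 i) ->
  lc n f d = 0.
Proof.
move=> H1 H2 H3 H4 H; rewrite (lc_ext f H) -!lcD -!lcZ H1 H2 H3 H4.
by rewrite !scaler0 !addr0.
Qed.
Lemma lc_comb6 n f d c1 c2 c3 c4 c5 c6 (a1 a2 a3 a4 a5 a6 : K) :
  lc n f c1 = 0 -> lc n f c2 = 0 -> lc n f c3 = 0 -> lc n f c4 = 0 ->
  lc n f c5 = 0 -> lc n f c6 = 0 ->
  (forall i, (i < n)%N -> d i = a1 * c1 i + a2 * c2 i + a3 * c3 i + a4 * c4 i
      + a5 * c5 i + a6 * c6 i) ->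
  lc n f d = 0.
Proof.
move=> H1 H2 H3 H4 H5 H6 H; rewrite (lc_ext f H) -!lcD -!lcZ H1 H2 H3 H4 H5 H6.
by rewrite !scaler0 !addr0.
Qed.
End LC.

Ltac lcnorm := repeat (rewrite ?lcZ ?lcN ?lcD).


Section S.
Variables (K : fieldType) (V0 V1 : lmodType K).
Local Notation P := (superspace V0 V1).
Implicit Types (m : P -> P -> P) (x y z : P).

Lemma m0l m : bilinear_prod m -> forall z, m 0 z = 0.
Proof.
case=> H _ z; have := H 1 0 0 z; rewrite !scale1r addr0 => e.
by apply: (addrI (m 0 z)); rewrite addr0 -e.
Qed.
Lemma m0r m : bilinear_prod m -> forall z, m z 0 = 0.
Proof.
case=> _ H z; have := H 1 0 0 z; rewrite !scale1r addr0 => e.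
by apply: (addrI (m z 0)); rewrite addr0 -e.
Qed.
Lemma mDl m : bilinear_prod m -> forall x y z, m (x + y) z = m x z + m y z.
Proof. by move=> Hm x y z; have := (proj1 Hm) 1 x y z; rewrite !scale1r. Qed.
Lemma mDr m : bilinear_prod m -> forall x y z, m z (x + y) = m z x + m z y.
Proof. by move=> Hm x y z; have := (proj2 Hm) 1 x y z; rewrite !scale1r. Qed.
Lemma mZl m : bilinear_prod m -> forall a x z, m (a *: x) z = a *: m x z.
Proof. by move=> Hm a x z; have := (proj1 Hm) a x 0 z; rewrite !addr0 (m0l Hm) addr0. Qed.
Lemma mZr m : bilinear_prod m -> forall a x z, m z (a *: x) = a *: m z x.
Proof. by move=> Hm a x z; have := (proj2 Hm) a x 0 z; rewrite !addr0 (m0r Hm) addr0. Qed.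
Lemma mNl m : bilinear_prod m -> forall x z, m (- x) z = - m x z.
Proof. by move=> Hm x z; rewrite -scaleN1r mZl // scaleN1r. Qed.
Lemma mNr m : bilinear_prod m -> forall x z, m z (- x) = - m z x.
Proof. by move=> Hm x z; rewrite -scaleN1r mZr // scaleN1r. Qed.

Lemma homog0 i : homog i (0 : P). Proof. by case: i. Qed.
Lemma homogD i x y : homog i x -> homog i y -> homog i (x + y).
Proof. by case: i => /= -> ->; rewrite addr0. Qed.
Lemma homogZ i a x : homog i x -> homog i (a *: x).
Proof. by case: i => /= ->; rewrite scaler0. Qed.
Lemma homogN i x : homog i x -> homog i (- x).
Proof. by move=> h; rewrite -scaleN1r; apply: homogZ. Qed.

Lemma comp_id i x : homog i x -> Defs.comp i x = x.
Proof. by case: x => x1 x2; case: i => /= ->. Qed.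
Lemma comp_0 i x : homog i x -> Defs.comp (~~ i) x = 0.
Proof. by case: x => x1 x2; case: i => /= ->. Qed.
Lemma compT0 x : homog true x -> Defs.comp false x = 0.
Proof. exact: (@comp_0 true). Qed.
Lemma compF0 x : homog false x -> Defs.comp true x = 0.
Proof. exact: (@comp_0 false). Qed.
Lemma compL i a x y : Defs.comp i (a *: x + y) = a *: Defs.comp i x + Defs.comp i y.
Proof. by case: i; rewrite /Defs.comp; apply: injective_projections => /=; rewrite ?scaler0 ?addr0. Qed.
Lemma comp_sum x : Defs.comp true x + Defs.comp false x = x.
Proof. by case: x => x1 x2; rewrite /Defs.comp /=; congr pair; rewrite ?add0r ?addr0. Qed.

Lemma sgnC a b : sgn K a b = sgn K b a :> K. Proof. by rewrite /sgn andbC. Qed.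

Lemma lin4 (a s h : K) (A B A' B' : P) :
  h *: (a *: A + B + s *: (a *: A' + B')) = a *: (h *: (A + s *: A')) + h *: (B + s *: B').
Proof.
rewrite !scalerDr !scalerA.
rewrite -!addrA; congr (_ *: _ + _); first by rewrite mulrC.
by rewrite addrCA; congr (_ *: _ + _); ring.
Qed.
Lemma lin4m (a s h : K) (A B A' B' : P) :
  h *: (a *: A + B - s *: (a *: A' + B')) = a *: (h *: (A - s *: A')) + h *: (B - s *: B').
Proof. by rewrite -!scaleNr lin4. Qed.

Section M.
Variable m : P -> P -> P.
Hypothesis Hm : bilinear_prod m.
Hypothesis He : even_prod m.

Lemma sdot_hom p q x y : homog p x -> homog q y ->
  sdot m x y = 2%:R^-1 *: (m x y + sgn K p q *: m y x).
Proof.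
move=> hx hy; rewrite /sdot !big_bool /=.
case: p hx => hx; case: q hy => hy; rewrite (comp_id hx) (comp_id hy) ?(compT0 hx) ?(compF0 hx) ?(compT0 hy) ?(compF0 hy);
  rewrite ?(m0l Hm) ?(m0r Hm) ?scaler0 ?addr0 ?add0r ?scaler0 ?addr0 ?add0r //.
Qed.
Lemma sbr_hom p q x y : homog p x -> homog q y ->
  sbr m x y = 2%:R^-1 *: (m x y - sgn K p q *: m y x).
Proof.
move=> hx hy; rewrite /sbr !big_bool /=.
case: p hx => hx; case: q hy => hy; rewrite (comp_id hx) (comp_id hy) ?(compT0 hx) ?(compF0 hx) ?(compT0 hy) ?(compF0 hy);
  rewrite ?(m0l Hm) ?(m0r Hm) ?scaler0 ?subr0 ?addr0 ?add0r ?sub0r ?oppr0 ?scaler0 ?subr0 ?addr0 ?add0r ?sub0r ?oppr0 //.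
Qed.

Lemma sdot_even : even_prod (sdot m).
Proof.
move=> i j x y hx hy; rewrite (sdot_hom hx hy); apply: homogZ; apply: homogD.
  exact: He.
by apply: homogZ; rewrite addbC; apply: He.
Qed.
Lemma sbr_even : even_prod (sbr m).
Proof.
move=> i j x y hx hy; rewrite (sbr_hom hx hy); apply: homogZ; apply: homogD.
  exact: He.
by apply: homogN; apply: homogZ; rewrite addbC; apply: He.
Qed.

Lemma sdot_bil : bilinear_prod (sdot m).
Proof.
split=> a x y z; rewrite /sdot scaler_sumr -big_split; apply: eq_bigr => i _;
  rewrite scaler_sumr -big_split; apply: eq_bigr => j _.
  by rewrite compL (mDl Hm) (mZl Hm) (mDr Hm) (mZr Hm) lin4.
by rewrite compL (mDl Hm) (mZl Hm) (mDr Hm) (mZr Hm) lin4.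
Qed.
Lemma sbr_bil : bilinear_prod (sbr m).
Proof.
split=> a x y z; rewrite /sbr scaler_sumr -big_split; apply: eq_bigr => i _;
  rewrite scaler_sumr -big_split; apply: eq_bigr => j _.
  by rewrite compL (mDl Hm) (mZl Hm) (mDr Hm) (mZr Hm) lin4m.
by rewrite compL (mDl Hm) (mZl Hm) (mDr Hm) (mZr Hm) lin4m.
Qed.

Lemma sdot_sbr (h2 : 2%:R != 0 :> K) x y : m x y = sdot m x y + sbr m x y.
Proof.
rewrite /sdot /sbr -big_split.
have -> : \sum_(i : bool) (\sum_(j : bool) 2%:R^-1 *: (m (Defs.comp i x) (Defs.comp j y) + sgn K i j *: m (Defs.comp j y) (Defs.comp i x))
   + \sum_(j : bool) 2%:R^-1 *: (m (Defs.comp i x) (Defs.comp j y) - sgn K i j *: m (Defs.comp j y) (Defs.comp i x)))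
   = \sum_(i : bool) \sum_(j : bool) m (Defs.comp i x) (Defs.comp j y).
  apply: eq_bigr => i _; rewrite -big_split; apply: eq_bigr => j _.
  rewrite /= -scalerDr addrACA subrr addr0 -mulr2n -scaler_nat scalerA mulVf ?scale1r //.
rewrite !big_bool /= -!(mDr Hm) -(mDl Hm).
by rewrite !comp_sum.
Qed.
End M.
End S.


Ltac mexpand Hm := repeat (first [rewrite (mDl Hm) | rewrite (mDr Hm) | rewrite (mZl Hm) | rewrite (mZr Hm) | rewrite (mNl Hm) | rewrite (mNr Hm)]).
Ltac lcnorm2 := repeat (first [rewrite lcZ | rewrite lcN | rewrite lcD]).
Ltac coefcheck i hn := do 12 (destruct i as [|i]; [rewrite /dl /sgn /=; field; try (by rewrite ?hn) | ]); done.

Section S3.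
Variables (K : fieldType) (V0 V1 : lmodType K).
Local Notation P := (superspace V0 V1).
Variable m : P -> P -> P.
Hypothesis Hm : bilinear_prod m.
Hypothesis He : even_prod m.
Lemma assoc_ii (Hs : star_identity m) (hn : forall n, (n%:R == 0 :> K) = (n == 0%N)) a b c x y z :
  homog a x -> homog b y -> homog c z ->
  sdot m (sdot m x y) z = sdot m x (sdot m y z).
Proof.
move=> hx hy hz.
have hxy := sdot_even Hm He hx hy; have hyz := sdot_even Hm He hy hz.
have bxy := sbr_even Hm He hx hy; have byz := sbr_even Hm He hy hz; have bzx := sbr_even Hm He hz hx; have bxz := sbr_even Hm He hx hz.
rewrite (sdot_hom Hm hxy hz) (sdot_hom Hm hx hyz) (sdot_hom Hm hx hy) (sdot_hom Hm hy hz).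
mexpand Hm.
apply/eqP; rewrite -subr_eq0; apply/eqP.
have H0 := Hs _ _ _ _ _ _ hx hy hz.
have H1 := Hs _ _ _ _ _ _ hx hz hy.
have H2 := Hs _ _ _ _ _ _ hy hx hz.
have H3 := Hs _ _ _ _ _ _ hy hz hx.
have H4 := Hs _ _ _ _ _ _ hz hx hy.
have H5 := Hs _ _ _ _ _ _ hz hy hx.
pose f := fun i => nth 0 [:: m (m x y) z; m (m x z) y; m (m y x) z; m (m y z) x; m (m z x) y; m (m z y) x; m x (m y z); m x (m z y); m y (m x z); m y (m z x); m z (m x y); m z (m y x)] i.
have e0 : m (m x y) z = lc 12 f (dl K 0) := @lc_dl K _ 12 f 0 isT.
rewrite ?e0 in H0 H1 H2 H3 H4 H5 *; clear e0.
have e1 : m (m x z) y = lc 12 f (dl K 1) := @lc_dl K _ 12 f 1 isT.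
rewrite ?e1 in H0 H1 H2 H3 H4 H5 *; clear e1.
have e2 : m (m y x) z = lc 12 f (dl K 2) := @lc_dl K _ 12 f 2 isT.
rewrite ?e2 in H0 H1 H2 H3 H4 H5 *; clear e2.
have e3 : m (m y z) x = lc 12 f (dl K 3) := @lc_dl K _ 12 f 3 isT.
rewrite ?e3 in H0 H1 H2 H3 H4 H5 *; clear e3.
have e4 : m (m z x) y = lc 12 f (dl K 4) := @lc_dl K _ 12 f 4 isT.
rewrite ?e4 in H0 H1 H2 H3 H4 H5 *; clear e4.
have e5 : m (m z y) x = lc 12 f (dl K 5) := @lc_dl K _ 12 f 5 isT.
rewrite ?e5 in H0 H1 H2 H3 H4 H5 *; clear e5.
have e6 : m x (m y z) = lc 12 f (dl K 6) := @lc_dl K _ 12 f 6 isT.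
rewrite ?e6 in H0 H1 H2 H3 H4 H5 *; clear e6.
have e7 : m x (m z y) = lc 12 f (dl K 7) := @lc_dl K _ 12 f 7 isT.
rewrite ?e7 in H0 H1 H2 H3 H4 H5 *; clear e7.
have e8 : m y (m x z) = lc 12 f (dl K 8) := @lc_dl K _ 12 f 8 isT.
rewrite ?e8 in H0 H1 H2 H3 H4 H5 *; clear e8.
have e9 : m y (m z x) = lc 12 f (dl K 9) := @lc_dl K _ 12 f 9 isT.
rewrite ?e9 in H0 H1 H2 H3 H4 H5 *; clear e9.
have e10 : m z (m x y) = lc 12 f (dl K 10) := @lc_dl K _ 12 f 10 isT.
rewrite ?e10 in H0 H1 H2 H3 H4 H5 *; clear e10.
have e11 : m z (m y x) = lc 12 f (dl K 11) := @lc_dl K _ 12 f 11 isT.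
rewrite ?e11 in H0 H1 H2 H3 H4 H5 *; clear e11.
move: H0 H1 H2 H3 H4 H5; lcnorm2; move=> H0 H1 H2 H3 H4 H5.
apply: (lc_comb6 (a1:=((12%:R)^-1 * (1))) (a2:=((12%:R)^-1 * (sgn K b c))) (a3:=0) (a4:=0) (a5:=(-(12%:R)^-1 * (sgn K a c * sgn K b c))) (a6:=(-(12%:R)^-1 * (sgn K a b * sgn K a c * sgn K b c))) H0 H1 H2 H3 H4 H5).
move=> i Hi; destruct a; destruct b; destruct c; coefcheck i hn.
Qed.

Lemma jac_ii (Hs : star_identity m) (hn : forall n, (n%:R == 0 :> K) = (n == 0%N)) a b c x y z :
  homog a x -> homog b y -> homog c z ->
  sgn K c a *: sbr m x (sbr m y z) + sgn K a b *: sbr m y (sbr m z x) + sgn K b c *: sbr m z (sbr m x y) = 0.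
Proof.
move=> hx hy hz.
have hxy := sdot_even Hm He hx hy; have hyz := sdot_even Hm He hy hz.
have bxy := sbr_even Hm He hx hy; have byz := sbr_even Hm He hy hz; have bzx := sbr_even Hm He hz hx; have bxz := sbr_even Hm He hx hz.
rewrite (sbr_hom Hm hx byz) (sbr_hom Hm hy bzx) (sbr_hom Hm hz bxy) (sbr_hom Hm hy hz) (sbr_hom Hm hz hx) (sbr_hom Hm hx hy).
mexpand Hm.
have H0 := Hs _ _ _ _ _ _ hx hy hz.
have H1 := Hs _ _ _ _ _ _ hx hz hy.
have H2 := Hs _ _ _ _ _ _ hy hx hz.
have H3 := Hs _ _ _ _ _ _ hy hz hx.
have H4 := Hs _ _ _ _ _ _ hz hx hy.
have H5 := Hs _ _ _ _ _ _ hz hy hx.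
pose f := fun i => nth 0 [:: m (m x y) z; m (m x z) y; m (m y x) z; m (m y z) x; m (m z x) y; m (m z y) x; m x (m y z); m x (m z y); m y (m x z); m y (m z x); m z (m x y); m z (m y x)] i.
have e0 : m (m x y) z = lc 12 f (dl K 0) := @lc_dl K _ 12 f 0 isT.
rewrite ?e0 in H0 H1 H2 H3 H4 H5 *; clear e0.
have e1 : m (m x z) y = lc 12 f (dl K 1) := @lc_dl K _ 12 f 1 isT.
rewrite ?e1 in H0 H1 H2 H3 H4 H5 *; clear e1.
have e2 : m (m y x) z = lc 12 f (dl K 2) := @lc_dl K _ 12 f 2 isT.
rewrite ?e2 in H0 H1 H2 H3 H4 H5 *; clear e2.
have e3 : m (m y z) x = lc 12 f (dl K 3) := @lc_dl K _ 12 f 3 isT.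
rewrite ?e3 in H0 H1 H2 H3 H4 H5 *; clear e3.
have e4 : m (m z x) y = lc 12 f (dl K 4) := @lc_dl K _ 12 f 4 isT.
rewrite ?e4 in H0 H1 H2 H3 H4 H5 *; clear e4.
have e5 : m (m z y) x = lc 12 f (dl K 5) := @lc_dl K _ 12 f 5 isT.
rewrite ?e5 in H0 H1 H2 H3 H4 H5 *; clear e5.
have e6 : m x (m y z) = lc 12 f (dl K 6) := @lc_dl K _ 12 f 6 isT.
rewrite ?e6 in H0 H1 H2 H3 H4 H5 *; clear e6.
have e7 : m x (m z y) = lc 12 f (dl K 7) := @lc_dl K _ 12 f 7 isT.
rewrite ?e7 in H0 H1 H2 H3 H4 H5 *; clear e7.
have e8 : m y (m x z) = lc 12 f (dl K 8) := @lc_dl K _ 12 f 8 isT.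
rewrite ?e8 in H0 H1 H2 H3 H4 H5 *; clear e8.
have e9 : m y (m z x) = lc 12 f (dl K 9) := @lc_dl K _ 12 f 9 isT.
rewrite ?e9 in H0 H1 H2 H3 H4 H5 *; clear e9.
have e10 : m z (m x y) = lc 12 f (dl K 10) := @lc_dl K _ 12 f 10 isT.
rewrite ?e10 in H0 H1 H2 H3 H4 H5 *; clear e10.
have e11 : m z (m y x) = lc 12 f (dl K 11) := @lc_dl K _ 12 f 11 isT.
rewrite ?e11 in H0 H1 H2 H3 H4 H5 *; clear e11.
move: H0 H1 H2 H3 H4 H5; lcnorm2; move=> H0 H1 H2 H3 H4 H5.
apply: (lc_comb6 (a1:=(-(12%:R)^-1 * (sgn K a c))) (a2:=((12%:R)^-1 * (sgn K a c * sgn K b c))) (a3:=((12%:R)^-1 * (sgn K a b * sgn K a c))) (a4:=(-(12%:R)^-1 * (sgn K a b))) (a5:=(-(12%:R)^-1 * (sgn K b c))) (a6:=((12%:R)^-1 * (sgn K a b * sgn K b c))) H0 H1 H2 H3 H4 H5).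
move=> i Hi; destruct a; destruct b; destruct c; coefcheck i hn.
Qed.

Lemma leib_ii (Hs : star_identity m) (hn : forall n, (n%:R == 0 :> K) = (n == 0%N)) a b c x y z :
  homog a x -> homog b y -> homog c z ->
  sbr m x (sdot m y z) = sdot m (sbr m x y) z + sgn K a b *: sdot m y (sbr m x z).
Proof.
move=> hx hy hz.
have hxy := sdot_even Hm He hx hy; have hyz := sdot_even Hm He hy hz.
have bxy := sbr_even Hm He hx hy; have byz := sbr_even Hm He hy hz; have bzx := sbr_even Hm He hz hx; have bxz := sbr_even Hm He hx hz.
rewrite (sbr_hom Hm hx hyz) (sdot_hom Hm bxy hz) (sdot_hom Hm hy bxz) (sdot_hom Hm hy hz) (sbr_hom Hm hx hy) (sbr_hom Hm hx hz).
mexpand Hm.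
apply/eqP; rewrite -subr_eq0; apply/eqP.
have H0 := Hs _ _ _ _ _ _ hx hy hz.
have H1 := Hs _ _ _ _ _ _ hx hz hy.
have H2 := Hs _ _ _ _ _ _ hy hx hz.
have H3 := Hs _ _ _ _ _ _ hy hz hx.
have H4 := Hs _ _ _ _ _ _ hz hx hy.
have H5 := Hs _ _ _ _ _ _ hz hy hx.
pose f := fun i => nth 0 [:: m (m x y) z; m (m x z) y; m (m y x) z; m (m y z) x; m (m z x) y; m (m z y) x; m x (m y z); m x (m z y); m y (m x z); m y (m z x); m z (m x y); m z (m y x)] i.
have e0 : m (m x y) z = lc 12 f (dl K 0) := @lc_dl K _ 12 f 0 isT.
rewrite ?e0 in H0 H1 H2 H3 H4 H5 *; clear e0.
have e1 : m (m x z) y = lc 12 f (dl K 1) := @lc_dl K _ 12 f 1 isT.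
rewrite ?e1 in H0 H1 H2 H3 H4 H5 *; clear e1.
have e2 : m (m y x) z = lc 12 f (dl K 2) := @lc_dl K _ 12 f 2 isT.
rewrite ?e2 in H0 H1 H2 H3 H4 H5 *; clear e2.
have e3 : m (m y z) x = lc 12 f (dl K 3) := @lc_dl K _ 12 f 3 isT.
rewrite ?e3 in H0 H1 H2 H3 H4 H5 *; clear e3.
have e4 : m (m z x) y = lc 12 f (dl K 4) := @lc_dl K _ 12 f 4 isT.
rewrite ?e4 in H0 H1 H2 H3 H4 H5 *; clear e4.
have e5 : m (m z y) x = lc 12 f (dl K 5) := @lc_dl K _ 12 f 5 isT.
rewrite ?e5 in H0 H1 H2 H3 H4 H5 *; clear e5.
have e6 : m x (m y z) = lc 12 f (dl K 6) := @lc_dl K _ 12 f 6 isT.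
rewrite ?e6 in H0 H1 H2 H3 H4 H5 *; clear e6.
have e7 : m x (m z y) = lc 12 f (dl K 7) := @lc_dl K _ 12 f 7 isT.
rewrite ?e7 in H0 H1 H2 H3 H4 H5 *; clear e7.
have e8 : m y (m x z) = lc 12 f (dl K 8) := @lc_dl K _ 12 f 8 isT.
rewrite ?e8 in H0 H1 H2 H3 H4 H5 *; clear e8.
have e9 : m y (m z x) = lc 12 f (dl K 9) := @lc_dl K _ 12 f 9 isT.
rewrite ?e9 in H0 H1 H2 H3 H4 H5 *; clear e9.
have e10 : m z (m x y) = lc 12 f (dl K 10) := @lc_dl K _ 12 f 10 isT.
rewrite ?e10 in H0 H1 H2 H3 H4 H5 *; clear e10.
have e11 : m z (m y x) = lc 12 f (dl K 11) := @lc_dl K _ 12 f 11 isT.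
rewrite ?e11 in H0 H1 H2 H3 H4 H5 *; clear e11.
move: H0 H1 H2 H3 H4 H5; lcnorm2; move=> H0 H1 H2 H3 H4 H5.
apply: (lc_comb6 (a1:=(-(12%:R)^-1 * (1))) (a2:=(-(12%:R)^-1 * (sgn K b c))) (a3:=((12%:R)^-1 * (sgn K a b))) (a4:=(-(12%:R)^-1 * (sgn K a b * sgn K a c))) (a5:=((12%:R)^-1 * (sgn K a c * sgn K b c))) (a6:=(-(12%:R)^-1 * (sgn K a b * sgn K a c * sgn K b c))) H0 H1 H2 H3 H4 H5).
move=> i Hi; destruct a; destruct b; destruct c; coefcheck i hn.
Qed.

End S3.


Section S4.
Variables (K : fieldType) (V0 V1 : lmodType K).
Local Notation P := (superspace V0 V1).
Variables dot br : P -> P -> P.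
Hypothesis Hp : is_poisson_superalgebra dot br.
Variable hn : forall n, (n%:R == 0 :> K) = (n == 0%N).

Let Hd : bilinear_prod dot. Proof. by case: Hp. Qed.
Let Ed : even_prod dot. Proof. by case: Hp. Qed.
Let Hb : bilinear_prod br. Proof. by case: Hp. Qed.
Let Eb : even_prod br. Proof. by case: Hp. Qed.
Let Hax := let: And5 _ _ _ _ h := Hp in h.

Lemma dotC p q u v : homog p u -> homog q v -> dot u v = sgn K p q *: dot v u.
Proof. by move=> hu hv; case: (Hax hu hv hu). Qed.
Lemma brA p q u v : homog p u -> homog q v -> br u v = - (sgn K p q *: br v u).
Proof. by move=> hu hv; case: (Hax hu hv hu). Qed.
Lemma assoc_i a b c x y z : homog a x -> homog b y -> homog c z ->
  dot (dot x y) z = dot x (dot y z).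
Proof. by move=> hx hy hz; case: (Hax hx hy hz). Qed.
Lemma jac_i a b c x y z : homog a x -> homog b y -> homog c z ->
  sgn K c a *: br x (br y z) + sgn K a b *: br y (br z x) + sgn K b c *: br z (br x y) = 0.
Proof. by move=> hx hy hz; case: (Hax hx hy hz). Qed.
Lemma leib_i a b c x y z : homog a x -> homog b y -> homog c z ->
  br x (dot y z) = dot (br x y) z + sgn K a b *: dot y (br x z).
Proof. by move=> hx hy hz; case: (Hax hx hy hz). Qed.

Definition m2 x y := dot x y + br x y.

Ltac pexpand := repeat (first [rewrite (mDl Hd) | rewrite (mDr Hd) | rewrite (mZl Hd) | rewrite (mZr Hd) | rewrite (mNl Hd) | rewrite (mNr Hd)
  | rewrite (mDl Hb) | rewrite (mDr Hb) | rewrite (mZl Hb) | rewrite (mZr Hb) | rewrite (mNl Hb) | rewrite (mNr Hb)]).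

Lemma star_i a b c x y z : homog a x -> homog b y -> homog c z ->
  3%:R *: m2 (m2 x y) z - 3%:R *: m2 x (m2 y z)
    + sgn K a b *: m2 (m2 y x) z
    - sgn K b c *: m2 (m2 x z) y
    - sgn K a b * sgn K a c *: m2 (m2 y z) x
    + sgn K a c * sgn K b c *: m2 (m2 z x) y = 0.
Proof.
move=> hx hy hz; rewrite /m2.
have HA := assoc_i hx hy hz; have HJ := jac_i hx hy hz; have HL1 := leib_i hx hy hz; have HL2 := leib_i hz hx hy.
move/eqP: HA; rewrite -subr_eq0 => /eqP HA.
move/eqP: HL1; rewrite -subr_eq0 => /eqP HL1.
move/eqP: HL2; rewrite -subr_eq0 => /eqP HL2.
move: HA HJ HL1 HL2.
pexpand.
rewrite ?(dotC hy hx) ?(brA hy hx) ?(dotC hz hx) ?(brA hz hx) ?(dotC hz hy) ?(brA hz hy).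
pexpand.
have dxy := Ed hx hy; have dxz := Ed hx hz; have dyz := Ed hy hz.
have bxy := Eb hx hy; have bxz := Eb hx hz; have byz := Eb hy hz.
rewrite ?(dotC hz dxy) ?(brA hz dxy) ?(dotC hz bxy) ?(brA hz bxy) ?(dotC hy dxz) ?(brA hy dxz) ?(dotC hy bxz) ?(brA hy bxz) ?(dotC hx dyz) ?(brA hx dyz) ?(dotC hx byz) ?(brA hx byz).
pexpand.
pose f := fun i => nth 0 [:: dot (dot x y) z; dot (br x y) z; br (dot x y) z; br (br x y) z; dot (dot x z) y; dot (br x z) y; br (dot x z) y; br (br x z) y; dot (dot y z) x; dot (br y z) x; br (dot y z) x; br (br y z) x] i.
have e0 : dot (dot x y) z = lc 12 f (dl K 0) := @lc_dl K _ 12 f 0 isT.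
rewrite ?e0; clear e0.
have e1 : dot (br x y) z = lc 12 f (dl K 1) := @lc_dl K _ 12 f 1 isT.
rewrite ?e1; clear e1.
have e2 : br (dot x y) z = lc 12 f (dl K 2) := @lc_dl K _ 12 f 2 isT.
rewrite ?e2; clear e2.
have e3 : br (br x y) z = lc 12 f (dl K 3) := @lc_dl K _ 12 f 3 isT.
rewrite ?e3; clear e3.
have e4 : dot (dot x z) y = lc 12 f (dl K 4) := @lc_dl K _ 12 f 4 isT.
rewrite ?e4; clear e4.
have e5 : dot (br x z) y = lc 12 f (dl K 5) := @lc_dl K _ 12 f 5 isT.
rewrite ?e5; clear e5.
have e6 : br (dot x z) y = lc 12 f (dl K 6) := @lc_dl K _ 12 f 6 isT.
rewrite ?e6; clear e6.
have e7 : br (br x z) y = lc 12 f (dl K 7) := @lc_dl K _ 12 f 7 isT.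
rewrite ?e7; clear e7.
have e8 : dot (dot y z) x = lc 12 f (dl K 8) := @lc_dl K _ 12 f 8 isT.
rewrite ?e8; clear e8.
have e9 : dot (br y z) x = lc 12 f (dl K 9) := @lc_dl K _ 12 f 9 isT.
rewrite ?e9; clear e9.
have e10 : br (dot y z) x = lc 12 f (dl K 10) := @lc_dl K _ 12 f 10 isT.
rewrite ?e10; clear e10.
have e11 : br (br y z) x = lc 12 f (dl K 11) := @lc_dl K _ 12 f 11 isT.
rewrite ?e11; clear e11.
lcnorm2; move=> HA HJ HL1 HL2.
apply: (lc_comb4 (a1:=4%:R) (a2:=-(2%:R) * sgn K a c) (a3:=-(2%:R)) (a4:=-(4%:R) * sgn K a c * sgn K b c) HA HJ HL1 HL2).
move=> i Hi; destruct a; destruct b; destruct c; coefcheck i hn.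
Qed.
End S4.


Section S5.
Variables (K : fieldType) (V0 V1 : lmodType K).
Local Notation P := (superspace V0 V1).

Lemma sgn2 a b : sgn K a b * sgn K b a = 1.
Proof. by case: a; case: b; rewrite /sgn /= ?mulr1 ?mulrNN ?mulr1. Qed.

Lemma sdotC_ii (m : P -> P -> P) (Hm : bilinear_prod m) a b x y :
  homog a x -> homog b y -> sdot m x y = sgn K a b *: sdot m y x.
Proof.
move=> hx hy; rewrite (sdot_hom Hm hx hy) (sdot_hom Hm hy hx).
rewrite [RHS]scalerA mulrC -scalerA; congr (_ *: _).
by rewrite scalerDr scalerA sgn2 scale1r addrC.
Qed.
Lemma sbrA_ii (m : P -> P -> P) (Hm : bilinear_prod m) a b x y :
  homog a x -> homog b y -> sbr m x y = - (sgn K a b *: sbr m y x).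
Proof.
move=> hx hy; rewrite (sbr_hom Hm hx hy) (sbr_hom Hm hy hx).
set W := (m y x - _ *: m x y).
have -> : - (sgn K a b *: (2%:R^-1 *: W)) = 2%:R^-1 *: (sgn K a b *: - W).
  by rewrite scalerN !scalerN !scalerA mulrC.
congr (_ *: _); rewrite /W opprB scalerBr scalerA sgn2 scale1r //.
Qed.
End S5.

Theorem mainTheorem1 (K : fieldType) (V0 V1 : lmodType K)
    (charK : [pchar K] =i pred0) :
  (* (i) *)
  (forall dot br : superspace V0 V1 -> superspace V0 V1 -> superspace V0 V1,
     is_poisson_superalgebra dot br ->
     star_identity (fun x y => dot x y + br x y)) /\
  (* (ii) *)
  (forall m : superspace V0 V1 -> superspace V0 V1 -> superspace V0 V1,
     bilinear_prod m -> even_prod m -> star_identity m ->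
     is_poisson_superalgebra (sdot m) (sbr m) /\
     (forall x y, m x y = sdot m x y + sbr m x y)) /\
  (* in particular *)
  ((exists dot br : superspace V0 V1 -> superspace V0 V1 -> superspace V0 V1,
      is_poisson_superalgebra dot br) <->
   (exists m : superspace V0 V1 -> superspace V0 V1 -> superspace V0 V1,
      [/\ bilinear_prod m, even_prod m & star_identity m])).
Proof.
have hn : forall n, (n%:R == 0 :> K) = (n == 0%N) by apply/pcharf0P.
have h2 : 2%:R != 0 :> K by rewrite hn.
have P1 : forall dot br : superspace V0 V1 -> superspace V0 V1 -> superspace V0 V1,
     is_poisson_superalgebra dot br ->
     star_identity (fun x y => dot x y + br x y).
  move=> dot br Hp a b c x y z hx hy hz; exact: (star_i Hp hx hy hz).
have P2 : forall m : superspace V0 V1 -> superspace V0 V1 -> superspace V0 V1,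
     bilinear_prod m -> even_prod m -> star_identity m ->
     is_poisson_superalgebra (sdot m) (sbr m) /\
     (forall x y, m x y = sdot m x y + sbr m x y).
  move=> m Hm He Hs; split; last by move=> x y; apply: sdot_sbr.
  split; [exact: sdot_bil | exact: sdot_even | exact: sbr_bil | exact: sbr_even |].
  move=> a b c x y z hx hy hz; split.
  - exact: (assoc_ii Hm He Hs hn hx hy hz).
  - exact: (sdotC_ii Hm hx hy).
  - exact: (sbrA_ii Hm hx hy).
  - exact: (jac_ii Hm He Hs hn hx hy hz).
  - exact: (leib_ii Hm He Hs hn hx hy hz).
split; first exact: P1.
split; first exact: P2.
split.
  case=> dot [br Hp]; exists (fun x y => dot x y + br x y); split; last exact: P1.
  - case: Hp => Hd _ Hb _ _; split=> a x y z.
      by rewrite (proj1 Hd) (proj1 Hb) scalerDr addrACA.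
    by rewrite (proj2 Hd) (proj2 Hb) scalerDr addrACA.
  - case: Hp => _ Ed _ Eb _ i j x y hx hy; apply: homogD; [exact: Ed | exact: Eb].
case=> m [Hm He Hs]; exists (sdot m), (sbr m); exact: (P2 m Hm He Hs).1.
Qed.
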